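(* Suppose Assumptions A.1, A.2 and A.3 (stated in the context) hold. Then the constraint matrix of the linear recourse polyhedron $P$ is totally unimodular. Every entry of this matrix lies in $\{0,\pm1\}$, and every determinant of one of its square submatrices lies in $\{0,\pm1\}$.
   Context: Fix $d \ge 1$. The decision variables are $\mathbf{x}=(x_1,\dots,x_d)$, representing an individual, and $\mathbf{a}=(a_1,\dots,a_d)$, representing an action, with $(\mathbf{x},\mathbf{a})\in\mathbb{R}^{2d}$. For a feature index $j\in[d]$, a *feature term* $v_j$ denotes one of $x_j$, $a_j$ or $x_j+a_j$. The choice may differ from constraint to constraint. A *linear recourse constraint* is a linear inequality of one of the following three types. (i) An *integer bound constraint* $L_j\le v_j$ or $v_j\le U_j$, where $L_j,U_j\in\mathbb{Z}$. (ii) A *$K$-hot constraint* $\sum_{j\in J_i} s_{ij}\, v_j\le K_i$, where $J_i\subseteq[d]$, each $s_{ij}\in\{+1,-1\}$, and $K_i\in\mathbb{Z}$. (iii) A *(unit) directional linkage constraint* $v_j\le v_k$, where $j,k\in[d]$. The feature space $\mathcal{X}$, the region of interest $\mathcal{R}$, the box $B(\mathbf{u},\mathbf{l})=\{\mathbf{x}:\mathbf{l}\le\mathbf{x}\le\mathbf{u}\}$ with $\mathbf{u},\mathbf{l}\in\mathbb{Z}^d$, and the action set $A(\mathbf{x})$ are all assumed to be described by finitely many linear recourse constraints. The *linear recourse polyhedron* $P\subseteq\mathbb{R}^{2d}$ is the set of all $(\mathbf{x},\mathbf{a})$ satisfying all of these constraints, namely $\mathbf{x}+\mathbf{a}\in\mathcal{X}$,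 $\mathbf{x}\in\mathcal{R}$, $\mathbf{x}\in B(\mathbf{u},\mathbf{l})$ and $\mathbf{a}\in A(\mathbf{x})$. Let $\mathcal{J}=\{J_i\}$ be the family of index sets of the $K$-hot constraints. The *implication graph* is the undirected graph with one node $n_j$ for each $j\in[d]$ and an edge between $n_j$ and $n_k$ whenever some directional linkage constraint acts on features $j$ and $k$. Assumption A.1: no feature index appears in more than one $K$-hot constraint, i.e. $J_i\cap J_k=\emptyset$ for all distinct $J_i,J_k\in\mathcal{J}$. Assumption A.2: each connected component of the implication graph contains at most one node $n_j$ with $j\in\bigcup_{J_i\in\mathcal{J}}J_i$. Assumption A.3: the implication graph is acyclic. *)

(* Defs.v *)
From HB Require Import structures.
From mathcomp Require Import all_boot all_order all_algebra.
Set Implicit Arguments. Unset Strict Implicit. Unset Printing Implicit Defensive.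
Import Order.TTheory GRing.Theory Num.Theory.
Local Open Scope ring_scope.

(* Variables are (x, a) in R^(2d); column c of the constraint matrix:
   lshift d j  <-> x_j,   rshift d j <-> a_j. *)

(* A feature term v_j : x_j, a_j or x_j + a_j. *)
Inductive fterm := TX | TA | TXA.

Definition term_vec (d : nat) (j : 'I_d) (t : fterm) : 'rV[int]_(d + d) :=
  \row_(c < d + d)
    ((if (c == lshift d j) && (if t is TA then false else true) then 1 else 0) +
     (if (c == rshift d j) && (if t is TX then false else true) then 1 else 0)).

Inductive lr_constraint (d : nat) :=
  | UpperB of 'I_d & fterm & int
  | LowerB of 'I_d & fterm & int
  | KHot of {set 'I_d} & ('I_d -> fterm) & ('I_d -> bool) & int
      (* KHot J t s K :  sum_(j in J) s_j v_j <= K, with v_j the term t j and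
         s_j = +1 if s j, -1 otherwise *)
  | Link of 'I_d & fterm & 'I_d & fterm.                  (* v_j <= v_k *)

(* The row of the constraint in the form  row * (x, a)^T <= rhs. *)
Definition constraint_row (d : nat) (c : lr_constraint d) : 'rV[int]_(d + d) :=
  match c with
  | UpperB j t _ => term_vec j t
  | LowerB j t _ => - term_vec j t
  | KHot J t s _ => \sum_(j in J) (if s j then 1 else -1) *: term_vec j (t j)
  | Link j tj k tk => term_vec j tj - term_vec k tk
  end.

Definition constraint_matrix (d m : nat) (cs : 'I_m -> lr_constraint d)
  : 'M[int]_(m, d + d) :=
  \matrix_(i < m) constraint_row (cs i).

Definition khot_set (d : nat) (c : lr_constraint d) : option {set 'I_d} :=
  match c with KHot J _ _ _ => Some J | _ => None end.

Definition assumption_A1 (d m : nat) (cs : 'I_m -> lr_constraint d) : Prop :=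
  forall p q (Jp Jq : {set 'I_d}), p != q ->
    khot_set (cs p) = Some Jp -> khot_set (cs q) = Some Jq -> Jp :&: Jq = set0.

Definition in_khot_union (d m : nat) (cs : 'I_m -> lr_constraint d) (j : 'I_d)
  : bool :=
  [exists p, if khot_set (cs p) is Some J then j \in J else false].

(* Implication graph: every directional linkage constraint acting on features
   j and k is an (undirected) edge between n_j and n_k. *)
Definition link_joins (d : nat) (c : lr_constraint d) (u v : 'I_d) : bool :=
  match c with
  | Link j _ k _ => ((j == u) && (k == v)) || ((j == v) && (k == u))
  | _ => false
  end.

Definition impl_adj (d m : nat) (cs : 'I_m -> lr_constraint d) : rel 'I_d :=
  fun u v => [exists p, link_joins (cs p) u v].

Definition assumption_A2 (d m : nat) (cs : 'I_m -> lr_constraint d) : Prop :=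
  forall u v : 'I_d, in_khot_union cs u -> in_khot_union cs v ->
    connect (impl_adj cs) u v -> u = v.

(* A cycle in the implication graph (as a multigraph with one edge per
   linkage constraint): n+1 distinct edges (constraints) and n+1 distinct
   nodes v_0, ..., v_n with edge e_i joining v_i and v_(i+1 mod n+1).
   (n = 0: self-loop; n = 1: two parallel edges.) *)
Definition impl_has_cycle (d m : nat) (cs : 'I_m -> lr_constraint d) : Prop :=
  exists (n : nat) (e : 'I_n.+1 -> 'I_m) (v : 'I_n.+1 -> 'I_d),
    [/\ injective e, injective v &
        forall i : 'I_n.+1, link_joins (cs (e i)) (v i) (v (ordS i))].

Definition assumption_A3 (d m : nat) (cs : 'I_m -> lr_constraint d) : Prop :=
  ~ impl_has_cycle cs.

Definition totally_unimodular (m n : nat) (A : 'M[int]_(m, n)) : Prop :=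
  forall (k : nat) (f : 'I_k -> 'I_m) (g : 'I_k -> 'I_n),
    injective f -> injective g -> \det (mxsub f g A) \in [:: 0; 1; -1].

(* Main.v *)
Require Import Defs.
From HB Require Import structures.
From mathcomp Require Import all_boot all_order all_algebra.
From mathcomp Require Import zify.
From Stdlib Require Import Classical.
Import Order.TTheory GRing.Theory Num.Theory.
Local Open Scope ring_scope.

Definition U (x : int) : bool := x \in [:: 0; 1; -1].

Lemma U_mul x y : U x -> U y -> U (x * y).
Proof. by rewrite /U !inE => /or3P[] /eqP-> /or3P[] /eqP->. Qed.

Lemma U_sign n : U ((-1) ^+ n).
Proof. by rewrite /U -signr_odd; case: (odd n). Qed.

Lemma minorE k m n (f : 'I_k.+1 -> 'I_m) (g : 'I_k.+1 -> 'I_n) (A : 'M[int]_(m, n)) i j :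
  row' i (col' j (mxsub f g A)) = mxsub (f \o lift i) (g \o lift j) A.
Proof. by apply/matrixP => a b; rewrite !mxE. Qed.

Lemma det_row1 k (M : 'M[int]_k.+1) i0 j0 :
  (forall j, j != j0 -> M i0 j = 0) -> \det M = M i0 j0 * cofactor M i0 j0.
Proof.
move=> H; rewrite (expand_det_row _ i0) (bigD1 j0) //= big1 ?addr0 //.
by move=> j Hj; rewrite H ?mul0r.
Qed.

Lemma det_col1 k (M : 'M[int]_k.+1) i0 j0 :
  (forall i, i != i0 -> M i j0 = 0) -> \det M = M i0 j0 * cofactor M i0 j0.
Proof.
move=> H; rewrite (expand_det_col _ j0) (bigD1 i0) //= big1 ?addr0 //.
by move=> j Hj; rewrite H ?mul0r.
Qed.

Lemma det_col2 k (M : 'M[int]_k.+1) r0 cx ca :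
  cx != ca -> (forall i, i != r0 -> M i ca = M i cx) ->
  \det M = (M r0 ca - M r0 cx) * cofactor M r0 ca.
Proof.
move=> Hne H.
have H0 : \sum_i M i cx * cofactor M i ca = 0.
  transitivity ((\adj M *m M) ca cx).
    by rewrite mxE; apply: eq_bigr => i _; rewrite mxE mulrC.
  by rewrite mul_adj_mx mxE eq_sym (negbTE Hne) mulr0n.
rewrite (expand_det_col _ ca).
have -> : \sum_i M i ca * cofactor M i ca =
   \sum_i M i ca * cofactor M i ca - \sum_i M i cx * cofactor M i ca.
  by rewrite H0 subr0.
rewrite -sumrB (bigD1 r0) //= big1 ?addr0 ?mulrBl //.
by move=> i Hi; rewrite -mulrBl H // subrr mul0r.
Qed.
Section Entries.
Variable d : nat.

Definition feat (c : 'I_(d + d)) : 'I_d :=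
  match split c with inl j => j | inr j => j end.

Lemma feat_l j : feat (lshift d j) = j.
Proof. by rewrite /feat (unsplitK (inl _ j)). Qed.
Lemma feat_r j : feat (rshift d j) = j.
Proof. by rewrite /feat (unsplitK (inr _ j)). Qed.

Lemma col_cases (c : 'I_(d + d)) : c = lshift d (feat c) \/ c = rshift d (feat c).
Proof.
rewrite /feat -{1 3}(splitK c); case: (split c) => j /=; [left|right] => //.
Qed.

Definition xc (t : fterm) : int := if t is TA then 0 else 1.
Definition ac (t : fterm) : int := if t is TX then 0 else 1.

Definition rowcoef (sel : fterm -> int) (c : lr_constraint d) (p : 'I_d) : int :=
  match c with
  | UpperB j t _ => if j == p then sel t else 0
  | LowerB j t _ => - (if j == p then sel t else 0)
  | KHot J t s _ => if p \in J then (if s p then 1 else -1) * sel (t p) else 0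
  | Link j tj k tk => (if j == p then sel tj else 0) - (if k == p then sel tk else 0)
  end.

Lemma term_l j t p : term_vec j t 0 (lshift d p) = if j == p then xc t else 0.
Proof.
rewrite /term_vec mxE eq_lshift eq_lrshift /= eq_sym.
by case: (j == p); case: t.
Qed.
Lemma term_r j t p : term_vec j t 0 (rshift d p) = if j == p then ac t else 0.
Proof.
rewrite /term_vec mxE eq_rshift eq_rlshift /= eq_sym.
by case: (j == p); case: t.
Qed.

Lemma khot_sum (J : {set 'I_d}) (s : 'I_d -> bool) (F : 'I_d -> 'I_d -> int) p :
  (forall j, F j p = 0 \/ j = p) ->
  \sum_(j in J) (if s j then 1 else -1) * F j p =
  if p \in J then (if s p then 1 else -1) * F p p else 0.
Proof.
move=> HF; case: ifP => HpJ.
  rewrite (bigD1 p) //= big1 ?addr0 // => j /andP[_ Hj].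
  by case: (HF j) => [->|E]; [rewrite mulr0| by rewrite E eqxx in Hj].
apply: big1 => j Hj; case: (HF j) => [->|E]; first by rewrite mulr0.
by move: Hj; rewrite E HpJ.
Qed.

Lemma row_l c p : constraint_row c 0 (lshift d p) = rowcoef xc c p.
Proof.
case: c => [j t K|j t K|J t s K|j tj k tk]; rewrite /constraint_row /rowcoef.
- by rewrite term_l.
- by rewrite mxE term_l.
- rewrite summxE; under eq_bigr do rewrite mxE term_l.
  rewrite (khot_sum J s (fun j p => if j == p then xc (t j) else 0)) ?eqxx // => j.
  by case: (j =P p); [right|left].
- rewrite (_ : (term_vec j tj - term_vec k tk) 0 (lshift d p) =
     term_vec j tj 0 (lshift d p) - term_vec k tk 0 (lshift d p)); last by rewrite !mxE.
  by rewrite !term_l.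
Qed.
Lemma row_r c p : constraint_row c 0 (rshift d p) = rowcoef ac c p.
Proof.
case: c => [j t K|j t K|J t s K|j tj k tk]; rewrite /constraint_row /rowcoef.
- by rewrite term_r.
- by rewrite mxE term_r.
- rewrite summxE; under eq_bigr do rewrite mxE term_r.
  rewrite (khot_sum J s (fun j p => if j == p then ac (t j) else 0)) ?eqxx // => j.
  by case: (j =P p); [right|left].
- rewrite (_ : (term_vec j tj - term_vec k tk) 0 (rshift d p) =
     term_vec j tj 0 (rshift d p) - term_vec k tk 0 (rshift d p)); last by rewrite !mxE.
  by rewrite !term_r.
Qed.

Definition involves (c : lr_constraint d) (p : 'I_d) : bool :=
  match c with
  | UpperB j _ _ | LowerB j _ _ => j == p
  | KHot J _ _ _ => p \in J
  | Link j _ k _ => (j == p) || (k == p)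
  end.

Definition noself (c : lr_constraint d) : bool :=
  match c with Link j _ k _ => j != k | _ => true end.

Definition sel01 (sel : fterm -> int) := forall t, sel t = 0 \/ sel t = 1.
Lemma xc01 : sel01 xc. Proof. by case; [right|left|right]. Qed.
Lemma ac01 : sel01 ac. Proof. by case; [left|right|right]. Qed.

Lemma rowcoef_U sel c p : sel01 sel -> U (rowcoef sel c p).
Proof.
move=> Hs; rewrite /U /rowcoef.
case: c => [j t K|j t K|J t s K|j tj k tk].
- by case: (j == p) => //; case: (Hs t) => ->.
- by case: (j == p) => //; case: (Hs t) => ->.
- by case: (p \in J) => //; case: (s p); case: (Hs (t p)) => ->.
- by case: (Hs tj) => E1; case: (Hs tk) => E2; case: (j == p); case: (k == p); rewrite ?E1 ?E2.
Qed.

Lemma rowcoef_inv sel c p : rowcoef sel c p != 0 -> involves c p.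
Proof.
rewrite /rowcoef /involves.
case: c => [j t K|j t K|J t s K|j tj k tk].
- by case: (j == p); rewrite ?eqxx.
- by case: (j == p); rewrite ?oppr0 ?eqxx.
- by case: (p \in J); rewrite ?eqxx.
- by case: (j == p); case: (k == p); rewrite ?subrr ?eqxx.
Qed.

Lemma rowcoef_eq c p : noself c -> rowcoef xc c p != 0 -> rowcoef ac c p != 0 ->
  rowcoef xc c p = rowcoef ac c p.
Proof.
rewrite /rowcoef /noself.
case: c => [j t K|j t K|J t s K|j tj k tk].
- by case: (j == p) => //; case: t.
- by case: (j == p) => //; case: t.
- by move=> _; case: (p \in J) => //; case: (s p); case: (t p).
- move=> Hjk; case: (j =P p) => [Ej|_]; case: (k =P p) => [Ek|_] //.
  + by move: Hjk; rewrite Ej Ek eqxx.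
  + by case: tj.
  + by case: tk.
Qed.

Lemma entry_l m (cs : 'I_m -> lr_constraint d) i p :
  constraint_matrix cs i (lshift d p) = rowcoef xc (cs i) p.
Proof. by rewrite /constraint_matrix mxE row_l. Qed.
Lemma entry_r m (cs : 'I_m -> lr_constraint d) i p :
  constraint_matrix cs i (rshift d p) = rowcoef ac (cs i) p.
Proof. by rewrite /constraint_matrix mxE row_r. Qed.

Lemma entry_U m (cs : 'I_m -> lr_constraint d) i c : U (constraint_matrix cs i c).
Proof.
by case: (col_cases c) => ->; rewrite ?entry_l ?entry_r rowcoef_U //;
  [exact: xc01|exact: ac01].
Qed.

Lemma entry_inv m (cs : 'I_m -> lr_constraint d) i c :
  constraint_matrix cs i c != 0 -> involves (cs i) (feat c).
Proof.
by case: (col_cases c) => ->; rewrite ?entry_l ?entry_r ?feat_l ?feat_r;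
  apply: rowcoef_inv.
Qed.

End Entries.
Arguments noself {d}. Arguments rowcoef {d}. Arguments rowcoef_eq {d}.
Arguments entry_l {d m}. Arguments entry_r {d m}. Arguments entry_U {d m}.
Arguments col_cases {d}. Arguments feat_l {d}. Arguments feat_r {d}.
Set Implicit Arguments. Unset Strict Implicit. Unset Printing Implicit Defensive.

Lemma link_pairs d (c : lr_constraint d) u v u' v' :
  link_joins c u v -> link_joins c u' v' ->
  (u = u' /\ v = v') \/ (u = v' /\ v = u').
Proof.
case: c => // j tj k tk /=.
by case/orP=> /andP[/eqP<- /eqP<-]; case/orP=> /andP[/eqP<- /eqP<-]; tauto.
Qed.

Lemma cycle_lemma d m (cs : 'I_m -> lr_constraint d) (L : nat)
  (W : nat -> 'I_d) (F : nat -> 'I_m) (en : 'I_m) :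
  (forall a b, (a <= L)%N -> (b <= L)%N -> W a = W b -> a = b) ->
  (forall a, (a < L)%N -> link_joins (cs (F a)) (W a) (W a.+1)) ->
  link_joins (cs en) (W L) (W 0) ->
  (L = 1%N -> en <> F 0) -> impl_has_cycle cs.
Proof.
move=> Winj Hl Hen Hne.
exists L, (fun i : 'I_L.+1 => if (i < L)%N then F i else en), (fun i : 'I_L.+1 => W i).
split.
- move=> a b /=.
  have Ha := ltn_ord a; have Hb := ltn_ord b.
  wlog Hab : a b Ha Hb / (a <= b)%N.
    move=> Hw E; case: (leqP a b) => H; first exact: Hw.
    by apply/esym; apply: (Hw b a Hb Ha (ltnW H)); rewrite E.
  case: (ltnP a L) => HaL; case: (ltnP b L) => HbL E.
  + have := Hl a HaL; rewrite E => Ha'.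
    have := link_pairs Ha' (Hl b HbL).
    case=> [[E1 _]|[E1 E2]]; first by apply/val_inj/Winj => //; lia.
    have := Winj _ _ (ltnW HaL) HbL E1; have := Winj _ _ HaL (ltnW HbL) E2; lia.
  + have := Hl a HaL; rewrite E => Ha'.
    have := link_pairs Ha' Hen.
    case=> [[E1 _]|[E1 E2]].
      by have := Winj _ _ (ltnW HaL) (leqnn L) E1; lia.
    have E3 := Winj _ _ (ltnW HaL) (leq0n L) E1.
    have E4 := Winj _ _ HaL (leqnn L) E2.
    by exfalso; apply: Hne; [rewrite -E4 E3 | rewrite -E E3].
  + lia.
  + by apply/val_inj => /=; lia.
- move=> a b /= E; apply/val_inj/Winj => //; rewrite -ltnS; exact: ltn_ord.
- move=> i /=; have Hi := ltn_ord i.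
  case: (ltnP i L) => HiL.
  + by rewrite /= modn_small ?ltnS //; apply: Hl.
  + have Ei : nat_of_ord i = L by apply/eqP; rewrite eqn_leq HiL -ltnS Hi.
    by rewrite /= Ei modnn.
Qed.

Section Main.
Variables (d m : nat) (cs : 'I_m -> lr_constraint d).
Hypotheses (HA1 : assumption_A1 cs) (HA2 : assumption_A2 cs) (HA3 : assumption_A3 cs).
Variables (k : nat) (f : 'I_k.+1 -> 'I_m) (g : 'I_k.+1 -> 'I_(d + d)).
Hypotheses (finj : injective f) (ginj : injective g).

Definition inF (p : 'I_d) : bool := [exists c, @feat d (g c) == p].
Definition edge (i : 'I_k.+1) (u w : 'I_d) := link_joins (cs (f i)) u w.
Definition ispath n (V : nat -> 'I_d) (E : nat -> 'I_k.+1) :=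
  [/\ (forall s, (s < n)%N -> edge (E s) (V s) (V s.+1)),
      (forall a b, (a <= n)%N -> (b <= n)%N -> V a = V b -> a = b) &
      (forall s, (s <= n)%N -> inF (V s))].

Lemma extend n V E en w : ispath n V E -> edge en (V n) w -> inF w ->
  ((0 < n)%N -> en <> E n.-1) ->
  exists V' E', ispath n.+1 V' E' /\ V' 0%N = V 0%N.
Proof.
move=> [Pe Pi PF] Hen Hw Hne.
case: (boolP [exists t : 'I_n.+1, V t == w]) => [/existsP[t /eqP Ht]|Hnot].
  exfalso; apply: HA3.
  have Htn : (t <= n)%N by rewrite -ltnS.
  apply: (@cycle_lemma d m cs (n - t) (fun a => V (t + a)%N) (fun a => f (E (t + a)%N)) (f en)).
  - move=> a b Ha Hb /Pi; lia.
  - move=> a Ha; rewrite addnS; apply: Pe; lia.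
  - by rewrite addn0 subnKC // Ht.
  - move=> HL E0; apply: (Hne); first lia.
    by apply: finj; rewrite E0 addn0; congr (f (E _)); lia.
exists (fun s => if s == n.+1 then w else V s), (fun s => if s == n then en else E s).
split => //; split.
- move=> s Hs; case: (ltngtP s n) => Hsn.
  + have -> : (s == n.+1) = false by lia.
    have -> : (s.+1 == n.+1) = false by lia.
    exact: Pe.
  + lia.
  + by rewrite Hsn !eqxx ifF //; apply/negbTE; lia.
- move=> a b Ha Hb.
  case: (a =P n.+1) => Ea; case: (b =P n.+1) => Eb.
  + by rewrite Ea Eb.
  + move=> Ew; case/negP: Hnot; apply/existsP; exists (Ordinal (n:=n.+1) (m:=b) (ltac:(lia))).
    by rewrite /= Ew.
  + move=> Ew; case/negP: Hnot; apply/existsP; exists (Ordinal (n:=n.+1) (m:=a) (ltac:(lia))).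
    by rewrite /= Ew.
  + apply: Pi; lia.
- move=> s Hs; case: (s =P n.+1) => Es //; apply: PF; lia.
Qed.

Lemma path_connect n V E : ispath n V E ->
  forall s, (s <= n)%N -> connect (impl_adj cs) (V 0%N) (V s).
Proof.
move=> [Pe _ _]; elim=> [|s IH] Hs; first exact: connect0.
apply: connect_trans (IH (ltnW Hs)) _; apply: connect1.
by apply/existsP; exists (f (E s)); apply: Pe.
Qed.


Definition M := mxsub f g (constraint_matrix cs).
Lemma ME i c : M i c = constraint_matrix cs (f i) (g c).
Proof. by rewrite mxE. Qed.

Definition bigrow i p :=
  (exists c, @feat d (g c) = p /\ M i c != 0) /\ (exists c, @feat d (g c) != p /\ M i c != 0).

Lemma big_cases i p : bigrow i p ->
  (exists J t s K, cs (f i) = KHot J t s K /\ p \in J) \/ (exists q, inF q /\ edge i p q).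
Proof.
move=> [[c [Hc Hnz]] [c' [Hc' Hnz']]].
have I1 := @entry_inv d m cs (f i) (g c); rewrite -ME Hc in I1; have {}I1 := I1 Hnz.
have I2 := @entry_inv d m cs (f i) (g c'); rewrite -ME in I2; have {}I2 := I2 Hnz'.
have Hq : inF (@feat d (g c')) by apply/existsP; exists c'.
move: (@feat d (g c')) Hq I2 Hc' => q Hq I2 Hqp.
rewrite /edge; move: I1 I2.
case: (cs (f i)) => [j t K|j t K|J t s K|j tj k' tk] /=.
- by move=> /eqP-> /eqP Eq; rewrite Eq eqxx in Hqp.
- by move=> /eqP-> /eqP Eq; rewrite Eq eqxx in Hqp.
- by move=> HJ _; left; exists J, t, s, K.
- move=> H1 H2; right; exists q; split => //.
  move: H1 H2 Hqp => /orP[/eqP Ej|/eqP Ek] /orP[/eqP Ej'|/eqP Ek'] Hqp.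
  + by move: Hqp; rewrite -Ej' Ej eqxx.
  + by rewrite Ej Ek' !eqxx.
  + by rewrite Ek Ej' !eqxx orbT.
  + by move: Hqp; rewrite -Ek' Ek eqxx.
Qed.

Lemma leaf_exists : exists p, inF p /\ exists r0, forall i, i != r0 -> ~ bigrow i p.
Proof.
apply: NNPP => Hno.
have badP : forall p, inF p -> forall r0, exists i, i != r0 /\ bigrow i p.
  move=> p Hp r0; apply: NNPP => H; apply: Hno; exists p; split => //.
  by exists r0 => i Hi Hb; apply: H; exists i.
have khot2 : forall i1 i2 p J1 t1 s1 K1 J2 t2 s2 K2, i1 != i2 ->
    cs (f i1) = KHot J1 t1 s1 K1 -> p \in J1 ->
    cs (f i2) = KHot J2 t2 s2 K2 -> p \in J2 -> False.
  move=> i1 i2 p J1 t1 s1 K1 J2 t2 s2 K2 Hne E1 H1 E2 H2.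
  have Hf : f i1 != f i2 by apply: contra Hne => /eqP/finj->.
  have := HA1 Hf; rewrite E1 E2 /= => /(_ J1 J2 erefl erefl) /setP /(_ p).
  by rewrite !inE H1 H2.
have L1 : forall p, inF p -> exists i q, inF q /\ edge i p q.
  move=> p Hp; case: (badP p Hp ord0) => i1 [_ B1].
  case: (big_cases B1) => [[J1 [t1 [s1 [K1 [E1 H1]]]]]|[q [Hq He]]]; last by exists i1, q.
  case: (badP p Hp i1) => i2 [N2 B2].
  case: (big_cases B2) => [[J2 [t2 [s2 [K2 [E2 H2]]]]]|[q [Hq He]]]; last by exists i2, q.
  by exfalso; apply: (khot2 i2 i1 p J2 t2 s2 K2 J1 t1 s1 K1).
have L2 : forall p, inF p -> forall i0,
    (exists i q, i != i0 /\ inF q /\ edge i p q) \/ in_khot_union cs p.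
  move=> p Hp i0; case: (badP p Hp i0) => i [Ni B].
  case: (big_cases B) => [[J [t [s [K [E H]]]]]|[q [Hq He]]].
  - by right; apply/existsP; exists (f i); rewrite E.
  - by left; exists i, q.
have [u0 [Fu0 Mu0]] : exists u0, inF u0 /\
    (forall v, inF v -> in_khot_union cs v -> in_khot_union cs u0).
  case: (pickP (fun p => inF p && in_khot_union cs p)) => [u /andP[Hu Mu]|Hn].
  - by exists u.
  - exists (@feat d (g ord0)); split; first by apply/existsP; exists ord0.
    by move=> v Hv Mv; move: (Hn v); rewrite Hv Mv.
have Hpath : forall n, exists V E, ispath n V E /\ V 0%N = u0.
  elim=> [|n [V [E [P HV0]]]].
  - exists (fun _ => u0), (fun _ => ord0); split => //; split => //.
    by move=> a b Ha Hb _; lia.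
  - have PF : inF (V n) by case: P => _ _ PF; apply: PF.
    move: P HV0 PF; case: n => [|n] P HV0 PF.
    + case: (L1 _ PF) => i [q [Hq He]].
      case: (extend P He Hq) => // V' [E' [P' E0]]; exists V', E'.
      by rewrite E0.
    + case: (L2 _ PF (E n)) => [[i [q [Ni [Hq He]]]]|Mn].
      * case: (extend P He Hq) => [_|V' [E' [P' E0]]]; first exact/eqP.
        by exists V', E'; rewrite E0.
      * exfalso; have Mu := Mu0 _ PF Mn.
        have C := path_connect P (leqnn _); rewrite HV0 in C.
        have Eq := HA2 Mu Mn C.
        case: P => _ Pi _.
        by have := Pi 0%N n.+1 (leq0n _) (leqnn _); rewrite HV0 Eq => /(_ erefl).
case: (Hpath d) => V [E [[_ Pi _] _]].
have Hinj : injective (fun a : 'I_d.+1 => V a).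
  by move=> a b /Pi H; apply/val_inj/H; rewrite -ltnS; exact: ltn_ord.
by have := leq_card _ Hinj; rewrite !card_ord ltnn.
Qed.

Lemma noself_all p : noself (cs p).
Proof.
case E: (cs p) => [||| j tj k' tk] //=; apply/negP => /eqP Ejk; apply: HA3.
exists 0%N, (fun _ => p), (fun _ => j); split.
- by move=> a b _; rewrite (ord1 a) (ord1 b).
- by move=> a b _; rewrite (ord1 a) (ord1 b).
- by move=> i; rewrite E /= Ejk eqxx.
Qed.

Lemma U_diff x y : U x -> U y -> (x != 0 -> y != 0 -> x = y) -> U (y - x).
Proof.
rewrite /U !inE => /or3P[] /eqP-> /or3P[] /eqP-> //= H.
- by have := H isT isT.
- by have := H isT isT.
Qed.

Lemma det_step :
  (forall (f' : 'I_k -> 'I_m) (g' : 'I_k -> 'I_(d + d)),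
     injective f' -> injective g' -> U (\det (mxsub f' g' (constraint_matrix cs)))) ->
  U (\det M).
Proof.
move=> IH.
have cofU : forall i c, U (cofactor M i c).
  move=> i c; rewrite /cofactor /M minorE; apply: U_mul; first exact: U_sign.
  apply: IH; apply: inj_comp => //; exact: lift_inj.
have MU : forall i c, U (M i c) by move=> i c; rewrite ME; apply: entry_U.
case: (boolP [exists i0, exists j0, [forall j, (j != j0) ==> (M i0 j == 0)]]).
  case/existsP=> i0 /existsP[j0 /forallP H].
  rewrite (@det_row1 k M i0 j0); first exact: U_mul.
  by move=> j Hj; apply/eqP; have := H j; rewrite Hj.
move=> HnA.
have HnA' : forall i j0, exists j, j != j0 /\ M i j != 0.
  move=> i j0; apply: NNPP => H; case/negP: HnA; apply/existsP; exists i.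
  apply/existsP; exists j0; apply/forallP => j; apply/implyP => Hj.
  by apply/negPn/negP => Hnz; apply: H; exists j.
case: leaf_exists => p [Fp [r0 Hr0]].
have pure : forall i, i != r0 -> forall c, @feat d (g c) = p -> M i c != 0 ->
    forall c', M i c' != 0 -> @feat d (g c') = p.
  move=> i Hi c Hc Hnz c' Hnz'; apply: NNPP => Hne; apply: (Hr0 i Hi); split.
  - by exists c.
  - by exists c'; split => //; apply/eqP.
have featE : forall c, @feat d (g c) = p -> g c = lshift d p \/ g c = rshift d p.
  by move=> c <-; apply: col_cases.
case: (classic ((exists cx, g cx = lshift d p) /\ (exists ca, g ca = rshift d p))).
- move=> [[cx Hx] [ca Ha]].
  have Fx : @feat d (g cx) = p by rewrite Hx feat_l.
  have Fa : @feat d (g ca) = p by rewrite Ha feat_r.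
  have Hxa : cx != ca.
    by apply/negP => /eqP E; move: Ha; rewrite -E Hx => /eqP; rewrite eq_lrshift.
  have only2 : forall c, @feat d (g c) = p -> c = cx \/ c = ca.
    move=> c /featE [E|E]; [left; apply: ginj; rewrite E Hx|right; apply: ginj; rewrite E Ha] => //.
  have Eeq : forall i, M i cx != 0 -> M i ca != 0 -> M i cx = M i ca.
    move=> i; rewrite !ME Hx Ha entry_l entry_r; apply: rowcoef_eq; exact: noself_all.
  rewrite (@det_col2 k M r0 cx ca Hxa); first apply: U_mul => //.
  + apply: U_diff => //; exact: Eeq.
  + move=> i Hi.
    case: (boolP (M i cx != 0)) => Hcx.
    * have [j [Hj Hnz]] := HnA' i cx.
      have := only2 j (pure i Hi cx Fx Hcx j Hnz); case=> Ej.
        by rewrite Ej eqxx in Hj.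
      by rewrite Eeq // -Ej.
    * case: (boolP (M i ca != 0)) => Hca.
        have [j [Hj Hnz]] := HnA' i ca.
        have := only2 j (pure i Hi ca Fa Hca j Hnz); case=> Ej; last by rewrite Ej eqxx in Hj.
        by move: Hcx; rewrite -Ej Hnz.
      by move: Hcx Hca; rewrite !negbK => /eqP-> /eqP->.
- move=> Hnot.
  have [c0 Fc0] : exists c0, @feat d (g c0) = p by case/existsP: Fp => c /eqP; exists c.
  have only1 : forall c, @feat d (g c) = p -> c = c0.
    move=> c Fc; apply: ginj; case: (featE c Fc) => E; case: (featE c0 Fc0) => E0;
      rewrite ?E ?E0 //; exfalso; apply: Hnot; split; eauto.
  rewrite (@det_col1 k M r0 c0); first exact: U_mul.
  move=> i Hi; apply/eqP/negPn/negP => Hnz.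
  have [j [Hj Hnzj]] := HnA' i c0.
  by have := only1 j (pure i Hi c0 Fc0 Hnz j Hnzj); move/eqP; rewrite (negbTE Hj).
Qed.
End Main.

Theorem mainTheorem1 (d m : nat) (cs : 'I_m -> lr_constraint d) :
  (0 < d)%N ->
  assumption_A1 cs -> assumption_A2 cs -> assumption_A3 cs ->
  totally_unimodular (constraint_matrix cs) /\
  (forall i j, constraint_matrix cs i j \in [:: 0; 1; -1]).
Proof.
move=> _ HA1 HA2 HA3; split; last by move=> i j; apply: entry_U.
move=> k; elim: k => [|k IH] f g finj ginj.
  by rewrite det_mx00 !inE.
have := @det_step d m cs HA1 HA2 HA3 k f g finj ginj.
by apply => f' g' Hf' Hg'; apply: IH.
Qed.
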